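(* Let $\alpha\in(0,1)$, $\delta>0$, $\epsilon>0$, and let $\lambda$ satisfy $0<\lambda<\alpha\,v_{\min}/s_{\max}$. Let $(\bar y,\bar C)$ be an optimal solution of the LP. Then for every task $T_{i,j}\in\mathcal T$, $$\bar C_{i,j}\ge(1-\alpha)\,\tau_{t^\alpha_{i,j}},$$ where $t^\alpha_{i,j}=\min\{\ell:\sum_{t=0}^\ell\sum_{s\in\mathcal V}\bar y_{i,j,s,t}|I_t|/p_{i,j,s}\ge\alpha\}$.
   Context: Problem MR. Jobs $\mathcal J=\{1,\dots,n\}$, processors $\mathcal P=\{1,\dots,m\}$. Job $j$ has weight $w_j>0$, release date $r_j\ge0$, and a nonempty set of Map tasks and a nonempty set of Reduce tasks, preassigned to processors with at most one task of each job per processor; $T_{i,j}$ is the task of job $j$ on processor $i$, with work $v_{i,j}\ge0$; $\mathcal T,\mathcal M,\mathcal R$ are the sets of all, Map, Reduce tasks. Running at speed $s$ uses power $s^\beta$ ($\beta>1$ fixed); $E>0$ is the energy budget. Notation: $w_{\min},w_{\max}$ min/max weights, $r_{\max}=\max_j r_j$, $v_{\max}=\max v_{i,j}$, $v_{\min}=\min\{v_{i,j}:v_{i,j}>0\}$, $t_{\max}=\frac{w_{\max}}{w_{\min}}\big(nr_{\max}+n(n+1)(|\mathcal T|v_{\max}^\beta/E)^{1/(\beta-1)}\big)$, $s_L=v_{\min}/t_{\max}$, $s_U=(E/v_{\min})^{1/(\beta-1)}$, $k=\lceil\log_{1+\epsilon}(s_U/s_L)\rceil$, $\mathcal V=\{s_L(1+\epsilon)^\ell:0\le\ell\le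 k\}$, $s_{\max}=s_L(1+\epsilon)^k$. LP: let $u$ be the least integer with $\lambda(1+\delta)^{u-1}\ge t_{\max}$, $\tau_0=0$, $\tau_t=\lambda(1+\delta)^{t-1}$ ($1\le t\le u+1$), $I_t=(\tau_t,\tau_{t+1}]$ of length $|I_t|$, $p_{i,j,s}=v_{i,j}/s$. Variables $y_{i,j,s,t},C_{i,j},C_j\ge0$. Minimize $\sum_jw_jC_j$ s.t. (1) $\sum_s\sum_{t=0}^u y_{i,j,s,t}|I_t|/p_{i,j,s}=1$ for all tasks; (2) $\sum_{j}\sum_s y_{i,j,s,t}\le1$ for all $i,t$; (3) $C_{i,j}\ge\frac12\sum_s y_{i,j,s,0}|I_0|(\frac1{p_{i,j,s}}+1)+\sum_{t=1}^u\sum_s(\frac{y_{i,j,s,t}|I_t|}{p_{i,j,s}}\tau_t+\frac12y_{i,j,s,t}|I_t|)$; (4) $C_j\ge C_{i,j}$; (5) $\sum_{T_{i,j}}\sum_s\sum_t y_{i,j,s,t}|I_t|s^\beta\le E$; (6) for $T_{i,j}\in\mathcal M$, $T_{i',j}\in\mathcal R$, $0\le\ell\le u$: $\sum_{t=0}^\ell\sum_s\frac{y_{i,j,s,t}|I_t|}{p_{i,j,s}}\ge\sum_{t=0}^\ell\sum_s\frac{y_{i',j,s,t}|I_t|}{p_{i',j,s}}$; (7) $y_{i,j,s,t}=0$ whenever $\tau_t<r_j$. *)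

(* Defs.v *)
From HB Require Import structures.
From mathcomp Require Import all_boot all_order all_algebra.
From mathcomp Require Import reals exp.
Unset Printing Implicit Defensive.
Import Order.TTheory GRing.Theory Num.Theory.
Local Open Scope ring_scope.

Section MR.
Variable R : realType.
(* n jobs ('I_n), m processors ('I_m) *)
Variables (n m : nat).
Variables (w r : 'I_n -> R).
(* isM i j : job j has a Map task on processor i; isR i j : a Reduce task. *)
Variables (isM isR : 'I_m -> 'I_n -> bool).
(* v i j : work of task T_{i,j} *)
Variable v : 'I_m -> 'I_n -> R.
Variables (beta E eps : R).

Definition isTask (i : 'I_m) (j : 'I_n) : bool := isM i j || isR i j.

Definition ntasks : nat := #|[set ij : 'I_m * 'I_n | isTask ij.1 ij.2]|.

Definition wmax : R := \big[Num.max/0]_(j < n) w j.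
Definition wmin : R := \big[Num.min/wmax]_(j < n) w j.
Definition rmax : R := \big[Num.max/0]_(j < n) r j.
Definition vmax : R :=
  \big[Num.max/0]_(ij : 'I_m * 'I_n | isTask ij.1 ij.2) v ij.1 ij.2.
Definition vmin : R :=
  \big[Num.min/vmax]_(ij : 'I_m * 'I_n | isTask ij.1 ij.2 && (0 < v ij.1 ij.2))
     v ij.1 ij.2.

Definition tmax : R :=
  wmax / wmin * (n%:R * rmax
     + n%:R * (n.+1)%:R * powR (ntasks%:R * powR vmax beta / E) (1 / (beta - 1))).

Definition sL : R := vmin / tmax.
Definition sU : R := powR (E / vmin) (1 / (beta - 1)).

Definition kk : int := Num.ceil (ln (sU / sL) / ln (1 + eps)).

(* V = { sL (1+eps)^l : 0 <= l <= k }, indexed by l : 'I_nV *)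
Definition nV : nat := if (0 <= kk)%R then (absz kk).+1 else 0%N.
Definition speed (l : 'I_nV) : R := sL * (1 + eps) ^+ l.
Definition smax : R := sL * (1 + eps) ^ kk.

Variables (lam delta : R) (u : nat).

Definition tau (t : nat) : R :=
  if t is t'.+1 then lam * (1 + delta) ^+ t' else 0.
(* |I_t| with I_t = (tau_t, tau_{t+1}] *)
Definition lenI (t : nat) : R := tau t.+1 - tau t.

Definition is_u : Prop :=
  tmax <= lam * (1 + delta) ^ (u%:Z - 1) /\
  (forall u' : int, u' < u%:Z -> lam * (1 + delta) ^ (u' - 1) < tmax).

Definition p (i : 'I_m) (j : 'I_n) (l : 'I_nV) : R := v i j / speed l.

Definition yvar := 'I_m -> 'I_n -> 'I_nV -> 'I_u.+1 -> R.

Definition frac (y : yvar) i j (t : 'I_u.+1) : R :=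
  \sum_(l < nV) y i j l t * lenI t / p i j l.

Definition cum (y : yvar) i j (k : nat) : R :=
  \sum_(t < u.+1 | (t <= k)%N) frac y i j t.

Definition feasible (y : yvar) (Ci : 'I_m -> 'I_n -> R) (C : 'I_n -> R) : Prop :=
  (forall i j l t, 0 <= y i j l t) /\
      (forall i j, 0 <= Ci i j) /\
      (forall j, 0 <= C j) /\
      (forall i j, isTask i j -> \sum_(t < u.+1) frac y i j t = 1) /\
      (forall i (t : 'I_u.+1),
          \sum_(j < n | isTask i j) \sum_(l < nV) y i j l t <= 1) /\
      (forall i j, isTask i j ->
          1 / 2 * (\sum_(l < nV) y i j l ord0 * lenI 0 * (1 / p i j l + 1))
          + \sum_(t < u.+1 | (1 <= t)%N) \sum_(l < nV)
               (y i j l t * lenI t / p i j l * tau t + 1 / 2 * (y i j l t * lenI t))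
          <= Ci i j) /\
      (forall i j, isTask i j -> Ci i j <= C j) /\
      (\sum_(ij : 'I_m * 'I_n | isTask ij.1 ij.2) \sum_(l < nV) \sum_(t < u.+1)
          y ij.1 ij.2 l t * lenI t * powR (speed l) beta <= E) /\
      (forall i i' j (k : 'I_u.+1), isM i j -> isR i' j ->
          cum y i' j k <= cum y i j k) /\
      (forall i j l (t : 'I_u.+1), isTask i j -> tau t < r j -> y i j l t = 0).

Definition objective (C : 'I_n -> R) : R := \sum_(j < n) w j * C j.

Definition optimal y Ci C : Prop :=
  feasible y Ci C /\
  forall y' Ci' C', feasible y' Ci' C' -> objective C <= objective C'.

End MR.

(* Main.v *)
Require Import Defs.
From HB Require Import structures.
From mathcomp Require Import all_boot all_order all_algebra.
From mathcomp Require Import reals exp.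
Import Order.TTheory GRing.Theory Num.Theory.
Local Open Scope ring_scope.

Lemma sub_sum (R : numDomainType) k (P Q : pred 'I_k) (G : 'I_k -> R) :
  (forall t, Q t -> P t) -> (forall t, P t -> 0 <= G t) ->
  \sum_(t | Q t) G t <= \sum_(t | P t) G t.
Proof.
move=> hQP hG; rewrite [X in _ <= X]big_mkcond [X in X <= _]big_mkcond /=.
apply: ler_sum => t _; case: (boolP (Q t)) => hq; first by rewrite (hQP t hq).
by case: (P t) (hG t) => // ->.
Qed.

Theorem lemma4 (R : realType) (n m : nat) (w r : 'I_n -> R)
  (isM isR : 'I_m -> 'I_n -> bool) (v : 'I_m -> 'I_n -> R)
  (beta E eps delta lam alpha : R) (u : nat)
  (hw : forall j, 0 < w j) (hr : forall j, 0 <= r j)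
  (hMR : forall i j, ~~ (isM i j && isR i j))
  (hMne : forall j, exists i, isM i j) (hRne : forall j, exists i, isR i j)
  (hv : forall i j, isTask n m isM isR i j -> 0 < v i j)
  (hbeta : 1 < beta) (hE : 0 < E)
  (halpha : 0 < alpha < 1) (hdelta : 0 < delta) (heps : 0 < eps)
  (hlam : 0 < lam < alpha * vmin R n m isM isR v / smax R n m w r isM isR v beta E eps)
  (hu : is_u R n m w r isM isR v beta E lam delta u)
  (y : yvar R n m w r isM isR v beta E eps u)
  (Ci : 'I_m -> 'I_n -> R) (C : 'I_n -> R)
  (hopt : optimal R n m w r isM isR v beta E eps lam delta u y Ci C) :
  forall i j, isTask n m isM isR i j ->
  forall ta : nat,
    alpha <= cum R n m w r isM isR v beta E eps lam delta u y i j ta ->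
    (forall l : nat, (l < ta)%N ->
        cum R n m w r isM isR v beta E eps lam delta u y i j l < alpha) ->
    (1 - alpha) * tau R lam delta ta <= Ci i j.
Proof.
  move=> i j hij ta hge hlt.
  have [[hy [hCi [_ [h1 [_ [h3 _]]]]]] _] := hopt.
  have [ha0 ha1] := andP halpha.
  have [hl0 hl1] := andP hlam.
  have tau_mono : forall a b : nat, (a <= b)%N -> tau R lam delta a <= tau R lam delta b.
    move=> [|a] [|b] //= hab.
    - by apply: mulr_ge0; [exact: ltW | apply: exprn_ge0; rewrite addr_ge0 // ltW].
    - apply: ler_wpM2l; first exact: ltW.
      apply: ler_weXn2l => //. by rewrite lerDl ltW.
  have tau_ge0 : forall a : nat, 0 <= tau R lam delta a.
    by move=> a; apply: (le_trans _ (tau_mono 0%N a isT)).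
  have lenI_ge0 : forall t : nat, 0 <= lenI R lam delta t.
    by move=> t; rewrite /lenI subr_ge0 tau_mono.
  have vmax_ge0 : 0 <= vmax R n m isM isR v.
    rewrite /vmax; apply: (big_ind (fun x => 0 <= x)) => //.
      by move=> x1 x2 hx1 hx2; rewrite le_max hx1.
    move=> ij /hv /ltW; done.
  have vmin_ge0 : 0 <= vmin R n m isM isR v.
    rewrite /vmin; apply: (big_ind (fun x => 0 <= x)) => //.
      by move=> x1 x2 hx1 hx2; rewrite le_min hx1.
    by move=> ij /andP [_ /ltW].
  have sL_gt0 : 0 < sL R n m w r isM isR v beta E.
    rewrite ltNge; apply/negP => hs.
    have hsm : smax R n m w r isM isR v beta E eps <= 0.
      by rewrite /smax mulr_le0_ge0 // ltW // exprz_gt0 // addr_gt0.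
    have : alpha * vmin R n m isM isR v / smax R n m w r isM isR v beta E eps <= 0.
      by apply: mulr_ge0_le0; [apply: mulr_ge0 => //; exact: ltW | rewrite invr_le0].
    by rewrite leNgt (lt_trans hl0 hl1).
  have termge0 : forall l (t : 'I_u.+1), 0 <= y i j l t * lenI R lam delta t / p R n m w r isM isR v beta E eps i j l.
    move=> l t; apply: divr_ge0; first by apply: mulr_ge0.
    rewrite /p; apply: divr_ge0; first by apply: ltW; apply: hv.
    apply: ltW; by rewrite /speed mulr_gt0 // exprn_gt0 // addr_gt0.
  have frac_ge0 : forall t : 'I_u.+1, 0 <= Defs.frac R n m w r isM isR v beta E eps lam delta u y i j t.
    by move=> t; rewrite /Defs.frac sumr_ge0.
  case: ta hge hlt => [|s] hge hlt.
    by rewrite /= mulr0.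
  have hcs := hlt s (ltnSn s).
  have htail : \sum_(t < u.+1 | (s.+1 <= t)%N) Defs.frac R n m w r isM isR v beta E eps lam delta u y i j t
      = 1 - cum R n m w r isM isR v beta E eps lam delta u y i j s.
    rewrite -(h1 i j hij) /cum [X in _ = X - _](bigID (fun t : 'I_u.+1 => (t <= s)%N)) /=.
    rewrite addrC addrK; apply: eq_bigl => t; by rewrite -ltnNge.
  apply: le_trans; last exact: (h3 i j hij).
  rewrite -[X in X <= _]add0r; apply: lerD.
    apply: mulr_ge0; first by rewrite mul1r invr_ge0 ler0n.
    apply: sumr_ge0 => l _.
    apply: mulr_ge0; first by apply: mulr_ge0.
    apply: addr_ge0 => //; apply: divr_ge0 => //; rewrite /p; apply: divr_ge0; first by apply: ltW; apply: hv.
    by apply: ltW; rewrite /speed mulr_gt0 // exprn_gt0 // addr_gt0.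
  set F := Defs.frac R n m w r isM isR v beta E eps lam delta u y i j.
  set T := tau R lam delta.
  apply: (@le_trans _ _ (\sum_(t < u.+1 | (s.+1 <= t)%N) F t * T t)); last first.
    apply: (@le_trans _ _ (\sum_(t < u.+1 | (0 < t)%N) F t * T t)).
      apply: sub_sum => t; first by apply: leq_trans.
      move=> _; apply: mulr_ge0 => //.
    rewrite /F /T; apply: ler_sum => t _; rewrite /Defs.frac mulr_suml; apply: ler_sum => l _.
    rewrite lerDl; apply: mulr_ge0; first by rewrite mul1r invr_ge0 ler0n.
    by apply: mulr_ge0.
  apply: (@le_trans _ _ (\sum_(t < u.+1 | (s.+1 <= t)%N) F t * T s.+1)); last first.
    apply: ler_sum => t ht; rewrite ler_wpM2l // ?frac_ge0 //; exact: tau_mono.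
  rewrite -mulr_suml htail; apply: ler_wpM2r => //.
  by rewrite lerD2l lerN2 ltW.
Qed.
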